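(* Let $T$ be a tree. Then $\gamma_{rdR}(T)=\gamma(T)+\gamma_r(T)$ if and only if $T$ is a star (i.e., $T\cong K_{1,m}$ for some $m\ge 0$, with $K_{1,0}=K_1$).
   Context: All graphs are finite and simple. An RDRD function of $G$ is a function $f:V(G)\to\{0,1,2,3\}$ such that every vertex with value $0$ has at least two neighbors with value $2$ or at least one neighbor with value $3$, every vertex with value $1$ has a neighbor with value $2$ or $3$, and the subgraph induced by the vertices with value $0$ has no isolated vertices; $\gamma_{rdR}(G)$ is the minimum of $\sum_v f(v)$ over RDRD functions. $\gamma(G)$ is the domination number; $\gamma_r(G)$ is the minimum cardinality of a set $S$ such that every vertex outside $S$ has a neighbor in $S$ and a neighbor outside $S$. *)

(* Defs.v *)
(* A finite simple graph is a symmetric irreflexive relation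
   e : rel T on a finType T (vertex set = T). *)
From mathcomp Require Import all_boot all_order.
Set Implicit Arguments. Unset Strict Implicit. Unset Printing Implicit Defensive.

Section Graphs.
Variables (T : finType) (e : rel T).

Definition simple_graph : Prop := symmetric e /\ irreflexive e.

Definition connected_graph : Prop := forall x y : T, connect e x y.

(* a cycle: distinct vertices x :: p (at least 3), consecutive adjacent,
   last adjacent to first *)
Definition has_cycle : Prop :=
  exists (x : T) (p : seq T),
    [/\ 2 <= size p, uniq (x :: p), path e x p & e (last x p) x].

Definition is_tree : Prop :=
  simple_graph /\ 0 < #|T| /\ connected_graph /\ ~ has_cycle.

Definition is_star : Prop :=
  exists c : T, forall x y : T, e x y = ((x == c) && (y != c)) || ((y == c) && (x != c)).

Definition dominating (S : {set T}) : bool :=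
  [forall v, (v \notin S) ==> [exists u, e v u && (u \in S)]].

Definition domination_number : nat :=
  #|[arg min_(S < [set: T] | dominating S) #|S|]|.

Definition restrained_dominating (S : {set T}) : bool :=
  [forall v, (v \notin S) ==>
     ([exists u, e v u && (u \in S)] && [exists u, e v u && (u \notin S)])].

Definition restrained_domination_number : nat :=
  #|[arg min_(S < [set: T] | restrained_dominating S) #|S|]|.

Definition is_RDRD (f : {ffun T -> 'I_4}) : bool :=
  [forall v,
     [&& ((f v : nat) == 0) ==>
           ((2 <= #|[set u | e v u & (f u : nat) == 2]|)
            || [exists u, e v u && ((f u : nat) == 3)]),
         ((f v : nat) == 1) ==> [exists u, e v u && (2 <= (f u : nat))]
       & ((f v : nat) == 0) ==> [exists u, e v u && ((f u : nat) == 0)]]].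

Definition weight (f : {ffun T -> 'I_4}) : nat := \sum_(v : T) (f v : nat).

Definition rdrd_number : nat :=
  weight [arg min_(f < [ffun _ => (inord 3 : 'I_4)] | is_RDRD f) weight f].

End Graphs.

(* Main.v *)
Require Import Defs.
From mathcomp Require Import all_boot all_order.
From mathcomp Require Import zify.
From Stdlib Require Import Classical.
Set Implicit Arguments. Unset Strict Implicit. Unset Printing Implicit Defensive.

Lemma dom_le (T : finType) (e : rel T) (S : {set T}) :
  dominating e S -> domination_number e <= #|S|.
Proof.
move=> HS; rewrite /domination_number.
case: arg_minnP => [|S0 _ Hmin]; last exact: Hmin.
by apply/forallP=> v; rewrite in_setT.
Qed.

Lemma dom_ex (T : finType) (e : rel T) :
  exists2 S, dominating e S & domination_number e = #|S|.
Proof.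
rewrite /domination_number.
case: arg_minnP => [|S0 HS _]; last by exists S0.
by apply/forallP=> v; rewrite in_setT.
Qed.

Lemma rdom_le (T : finType) (e : rel T) (S : {set T}) :
  restrained_dominating e S -> restrained_domination_number e <= #|S|.
Proof.
move=> HS; rewrite /restrained_domination_number.
case: arg_minnP => [|S0 _ Hmin]; last exact: Hmin.
by apply/forallP=> v; rewrite in_setT.
Qed.

Lemma rdom_ex (T : finType) (e : rel T) :
  exists2 S, restrained_dominating e S & restrained_domination_number e = #|S|.
Proof.
rewrite /restrained_domination_number.
case: arg_minnP => [|S0 HS _]; last by exists S0.
by apply/forallP=> v; rewrite in_setT.
Qed.

Lemma rdrd_le (T : finType) (e : rel T) f :
  is_RDRD e f -> rdrd_number e <= weight f.
Proof.
move=> Hf; rewrite /rdrd_number.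
case: arg_minnP => [|f0 _ Hmin]; last exact: Hmin.
by apply/forallP=> v; rewrite ffunE inordK.
Qed.

Lemma rdrd_ex (T : finType) (e : rel T) :
  exists2 f, is_RDRD e f & rdrd_number e = weight f.
Proof.
rewrite /rdrd_number.
case: arg_minnP => [|f0 Hf _]; last by exists f0.
by apply/forallP=> v; rewrite ffunE inordK.
Qed.

Definition Aset (T : finType) (f : {ffun T -> 'I_4}) (k : nat) : {set T} :=
  [set v | k <= (f v : nat)].


Lemma weight_A (T : finType) (f : {ffun T -> 'I_4}) :
  weight f = #|Aset f 1| + #|Aset f 2| + #|Aset f 3|.
Proof.
have E k : #|Aset f k| = \sum_v (k <= f v : nat).
  by rewrite -sum1_card big_mkcond /=; apply: eq_bigr => i _; rewrite inE; case: (_ <= _).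
rewrite /weight !E -!big_split /=.
by apply: eq_bigr => v _; case: (f v) => [[|[|[|[|k]]]] Hk].
Qed.

Lemma rdrdP (T : finType) (e : rel T) f v : is_RDRD e f ->
  [/\ (f v : nat) = 0 ->
        (2 <= #|[set u | e v u & (f u : nat) == 2]|)
            || [exists u, e v u && ((f u : nat) == 3)],
      (f v : nat) = 1 -> exists2 u, e v u & 2 <= (f u : nat)
    & (f v : nat) = 0 -> exists2 u, e v u & (f u : nat) = 0].
Proof.
move=> /forallP /(_ v) /and3P [H0 H1 H2]; split => Hv.
- by move: H0; rewrite Hv.
- by move: H1; rewrite Hv /= => /existsP [u /andP [] ]; exists u.
- by move: H2; rewrite Hv /= => /existsP [u /andP [? /eqP]]; exists u.
Qed.

Lemma rdrd0 (T : finType) (e : rel T) f v : is_RDRD e f -> (f v : nat) = 0 ->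
  exists2 u, e v u & 2 <= (f u : nat).
Proof.
move=> Hf Hv; case: (rdrdP v Hf) => /(_ Hv) /orP [] + _ _.
- move=> /ltnW /card_gt0P [u]; rewrite inE => /andP [? /eqP Hu].
  by exists u; rewrite // Hu.
- by move=> /existsP [u /andP [? /eqP Hu]]; exists u; rewrite // Hu.
Qed.

Lemma rdrd0two (T : finType) (e : rel T) f v : is_RDRD e f -> (f v : nat) = 0 ->
  (forall u, (f u : nat) != 3) ->
  exists a b, [/\ a != b, e v a, e v b, (f a : nat) = 2 & (f b : nat) = 2].
Proof.
move=> Hf Hv H3; case: (rdrdP v Hf) => /(_ Hv) /orP [] + _ _.
- move=> /card_gt1P [a [b [Ha Hb Hab]]]; move: Ha Hb; rewrite !inE.
  by move=> /andP [? /eqP ?] /andP [? /eqP ?]; exists a, b.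
- by move=> /existsP [u /andP [_ Hu]]; move: (H3 u); rewrite Hu.
Qed.

Lemma A2_dom (T : finType) (e : rel T) f : is_RDRD e f -> dominating e (Aset f 2).
Proof.
move=> Hf; apply/forallP => v; apply/implyP; rewrite inE -ltnNge => Hv.
have [u Hu1 Hu2] : exists2 u, e v u & 2 <= (f u : nat).
  case: (rdrdP v Hf) => _ H1 _.
  move: Hv; case Ev: (f v : nat) => [|[|k]] // _; first exact: rdrd0 Hf Ev.
  exact: H1.
by apply/existsP; exists u; rewrite Hu1 inE.
Qed.

Lemma A1_rdom (T : finType) (e : rel T) f :
  is_RDRD e f -> restrained_dominating e (Aset f 1).
Proof.
move=> Hf; apply/forallP => v; apply/implyP; rewrite inE -ltnNge ltnS leqn0 => /eqP Hv.
have [u Hu1 Hu2] := rdrd0 Hf Hv.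
case: (rdrdP v Hf) => _ _ /(_ Hv) [w Hw1 Hw2].
apply/andP; split; apply/existsP; [exists u | exists w].
- by rewrite Hu1 inE (leq_trans _ Hu2).
- by rewrite Hw1 inE Hw2.
Qed.

Lemma lowerA (T : finType) (e : rel T) f : is_RDRD e f ->
  domination_number e + restrained_domination_number e + #|Aset f 3| <= weight f.
Proof.
move=> Hf; rewrite weight_A.
have := dom_le (A2_dom Hf); have := rdom_le (A1_rdom Hf); lia.
Qed.

Lemma star_of (T : finType) (e : rel T) :
  simple_graph e -> 0 < #|T| -> connected_graph e ->
  (forall x y, e x y -> (forall z, e x z -> z = y) \/ (forall z, e y z -> z = x)) ->
  is_star e.
Proof.
move=> [Hsym Hirr] Hn Hconn H.
have [c Hc] : exists c, forall x, e c x -> forall z, e x z -> z = c.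
  case: (pickP (fun c => [exists a, exists b, e c a && e c b && (a != b)])) => [c|Hno].
  - move=> /existsP [a /existsP [b /andP [/andP [Hca Hcb] Hab]]].
    exists c => x Hcx z Hxz; case: (H c x Hcx) => [Hc'|]; last by apply.
    by move: Hab; rewrite (Hc' a Hca) (Hc' b Hcb) eqxx.
  - move: Hn => /card_gt0P [c0 _]; exists c0 => x Hcx z Hxz.
    apply/eqP; apply: contraFT (Hno x) => Hz; apply/existsP; exists c0; apply/existsP; exists z.
    by rewrite Hsym Hcx Hxz eq_sym.
have Hcl : forall y, y = c \/ e c y.
  move=> y; have /connectP [p Hp ->] := Hconn c y.
  have Hgen : forall s q, (s = c \/ e c s) -> path e s q -> last s q = c \/ e c (last s q).
    move=> s q; elim: q s => [|x q IH] s //= Hs /andP [Hsx Hq]; apply: IH Hq.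
    case: Hs => [Es|Hcs]; first by right; rewrite -Es.
    by left; exact: Hc Hcs _ Hsx.
  by apply: Hgen Hp; left.
exists c => x y.
case: (eqVneq x c) => [->|Hxc]; case: (eqVneq y c) => [->|Hyc];
  rewrite ?eqxx ?(negbTE Hxc) ?(negbTE Hyc) ?Hxc ?Hyc /=.
- exact: Hirr c.
- by case: (Hcl y) => // Ey; move: Hyc; rewrite Ey eqxx.
- by case: (Hcl x) => [Ex|]; [move: Hxc; rewrite Ex eqxx | rewrite Hsym].
- case: (Hcl x) => [Ex|Hcx]; first by move: Hxc; rewrite Ex eqxx.
  apply/negbTE/negP => Hxy; move: Hyc; by rewrite (Hc x Hcx y Hxy) eqxx.
Qed.

Lemma nonstar_edge (T : finType) (e : rel T) : is_tree e -> ~ is_star e ->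
  exists x y z1 z2, [/\ e x y, e x z1, z1 != y, e y z2 & z2 != x].
Proof.
move=> [Hs [Hn [Hc _]]] Hns.
apply: NNPP => Hno; apply: Hns; apply: star_of => // x y Hxy.
case: (boolP [forall z, e x z ==> (z == y)]) => [/forallP Hall|/forallPn [z1]].
  by left => z /(implyP (Hall z)) /eqP.
rewrite negb_imply => /andP [Hxz1 Hz1]; right.
case: (boolP [forall z, e y z ==> (z == x)]) => [/forallP Hall|/forallPn [z2]].
  by move=> z /(implyP (Hall z)) /eqP.
rewrite negb_imply => /andP [Hyz2 Hz2]; exfalso; apply: Hno.
by exists x, y, z1, z2.
Qed.

Lemma strictB (T : finType) (e : rel T) f : is_tree e -> ~ is_star e -> is_RDRD e f ->
  domination_number e + restrained_domination_number e < weight f.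
Proof.
move=> Ht Hns Hf; have [[Hsym Hirr] [Hn [Hconn Hcyc]]] := Ht.
have Hlow := lowerA Hf.
case: (posnP #|Aset f 3|) => [A30|]; last by move=> H; lia.
have H3 : forall u, (f u : nat) != 3.
  move=> u; apply/negP => /eqP Hu; move: A30 => /eqP; rewrite cards_eq0 => /eqP A3.
  have : u \in Aset f 3 by rewrite inE Hu.
  by rewrite A3 inE.
have Hd := dom_le (A2_dom Hf); have Hr := rdom_le (A1_rdom Hf).
rewrite weight_A A30 addn0.
case: (boolP [forall v, 1 <= (f v : nat)]) => [/forallP Hall|/forallPn [v0]].
- have [x [y [z1 [z2 [Hxy Hxz1 Hz1y Hyz2 Hz2x]]]]] := nonstar_edge Ht Hns.
  have Hxy' : x != y by apply: contraTneq Hxy => ->; rewrite Hirr.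
  have HS : restrained_dominating e (~: [set x; y]).
    apply/forallP => v; apply/implyP; rewrite !inE negbK => /orP [] /eqP ->.
    + apply/andP; split; apply/existsP; [exists z1 | exists y]; rewrite ?Hxy ?Hxz1 !inE ?eqxx ?orbT //=.
      by rewrite negb_or Hz1y andbT; apply: contraTneq Hxz1 => ->; rewrite Hirr.
    + apply/andP; split; apply/existsP; [exists z2 | exists x]; rewrite ?Hyz2 !inE ?eqxx ?orbT //=.
      * by rewrite negb_or Hz2x; apply: contraTneq Hyz2 => ->; rewrite Hirr.
      * by rewrite Hsym Hxy.
  have := rdom_le HS; have := cardsC [set x; y]; rewrite cards2 Hxy'.
  have -> : Aset f 1 = [set: T] by apply/setP => v; rewrite !inE Hall.
  rewrite cardsT; lia.
rewrite -ltnNge ltnS leqn0 => /eqP Hv0.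
case: (boolP [exists y, exists w, exists z,
   [&& 1 <= (f y : nat), e y w, (f w : nat) == 0, e y z & 1 <= (f z : nat)]]).
- move=> /existsP [y /existsP [w /existsP [z /and5P [Hy Hyw /eqP Hw Hyz Hz]]]].
  have HS : restrained_dominating e (Aset f 1 :\ y).
    apply/forallP => u; apply/implyP; rewrite !inE negb_and negbK -ltnNge ltnS leqn0.
    case/orP => [/eqP ->|/eqP Hu].
    + apply/andP; split; apply/existsP; [exists z | exists w]; rewrite ?Hyz ?Hyw !inE ?Hz ?Hw ?andbT ?andbF //=.
      by apply: contraTneq Hyz => ->; rewrite Hirr.
    + have [_ _ H0'] := rdrdP u Hf; have [w' Hw'1 Hw'2] := H0' Hu.
      have [a [b [Hab Hua Hub Ha Hb]]] := rdrd0two Hf Hu H3.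
      apply/andP; split; apply/existsP.
      * case: (eqVneq a y) => [Eay|Hay].
        -- exists b; rewrite Hub !inE Hb andbT /=; by rewrite -Eay eq_sym.
        -- by exists a; rewrite Hua !inE Ha Hay.
      * by exists w'; rewrite Hw'1 !inE Hw'2 andbF.
  have := rdom_le HS; have := cardsD1 y (Aset f 1); rewrite inE Hy; lia.
move=> Hno.
have Hn' : forall y w z, 1 <= (f y : nat) -> e y w -> (f w : nat) = 0 -> e y z -> 1 <= (f z : nat) -> False.
  move=> y w z Hy Hyw Hw Hyz Hz; move/negP: Hno; apply; apply/existsP; exists y.
  apply/existsP; exists w; apply/existsP; exists z; by rewrite Hy Hyw Hw eqxx Hyz Hz.
have [a [b [Hab Hva Hvb Ha Hb]]] := rdrd0two Hf Hv0 H3.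
have Ha0 : forall u, e a u -> (f u : nat) = 0.
  move=> u Hau; apply/eqP; rewrite -leqn0 leqNgt; apply/negP => Hu.
  by apply: (Hn' a v0 u) => //; rewrite ?Ha // Hsym.
have Hb0 : forall u, e b u -> (f u : nat) = 0.
  move=> u Hau; apply/eqP; rewrite -leqn0 leqNgt; apply/negP => Hu.
  by apply: (Hn' b v0 u) => //; rewrite ?Hb // Hsym.
have Hav : a != v0 by apply/eqP => E; move: Ha; rewrite E Hv0.
have Hbv : b != v0 by apply/eqP => E; move: Hb; rewrite E Hv0.
have HD : dominating e (v0 |: (Aset f 2 :\: [set a; b])).
  apply/forallP => u; apply/implyP; rewrite !inE negb_or negb_and !negbK => /andP [Huv Hu].
  case: (boolP ((u == a) || (u == b))) => [Hu2|].
    apply/existsP; exists v0; rewrite !inE eqxx andbT.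
    by case/orP: Hu2 => /eqP ->; rewrite Hsym.
  rewrite negb_or => /andP [Hua Hub]; move: Hu; rewrite (negbTE Hua) (negbTE Hub) /= -ltnNge ltnS.
  case Efu: (f u : nat) => [|[|k]] // _.
  + have [p [q [Hpq Hup Huq Hp Hq]]] := rdrd0two Hf Efu H3.
    case: (boolP ((p == a) || (p == b))) => Hp2; last first.
      by apply/existsP; exists p; rewrite Hup !inE Hp leqnn andbT Hp2 orbT.
    case: (boolP ((q == a) || (q == b))) => Hq2; last first.
      by apply/existsP; exists q; rewrite Huq !inE Hq leqnn andbT Hq2 orbT.
    have [Hea Heb] : e u a /\ e u b.
      by case/orP: Hp2 => /eqP Ep; case/orP: Hq2 => /eqP Eq; subst p q; rewrite ?eqxx in Hpq...
    exfalso; apply: Hcyc; exists u, [:: a; v0; b]; split => //=.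
    * rewrite !inE !negb_or Hua Huv Hub (negbTE Hab) (negbTE Hav) /=. by rewrite eq_sym Hbv.

    * by rewrite Hea Hvb (Hsym a) Hva.
    * by rewrite Hsym.
  + have [_ H1 _] := rdrdP u Hf; have [g Hug Hg] := H1 Efu.
    have Hga : g != a by apply: contraTneq Hug => ->; rewrite Hsym; apply/negP => /Ha0; rewrite Efu.
    have Hgb : g != b by apply: contraTneq Hug => ->; rewrite Hsym; apply/negP => /Hb0; rewrite Efu.
    by apply/existsP; exists g; rewrite Hug !inE negb_or Hga Hgb Hg orbT.
have := dom_le HD; rewrite cardsU1.
have := cardsID [set a; b] (Aset f 2).
have -> : Aset f 2 :&: [set a; b] = [set a; b].
  by apply/setIidPr/subsetP => x; rewrite !inE => /orP [] /eqP ->; rewrite ?Ha ?Hb.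
rewrite cards2 Hab.
case: (v0 \notin _) => /=; lia.
Qed.

Lemma star_eq (T : finType) (e : rel T) : simple_graph e -> 0 < #|T| -> is_star e ->
  rdrd_number e = domination_number e + restrained_domination_number e.
Proof.
move=> [Hsym Hirr] Hn [c Hc].
have [f Hf Ef] := rdrd_ex e.
have Hlow := lowerA Hf.
have Hg : 1 <= domination_number e.
  have [S HS ->] := dom_ex e; rewrite card_gt0; apply/negP => /eqP S0.
  move/forallP: HS => /(_ c); rewrite S0 inE /= => /existsP [u].
  by rewrite inE andbF.
have Hr : #|T| <= restrained_domination_number e.
  have [S HS ->] := rdom_ex e.
  suff -> : S = [set: T] by rewrite cardsT.
  apply/setP => v; rewrite in_setT; apply: contraT => Hv.
  have /andP [/existsP [u /andP [Hvu HuS]] /existsP [t /andP [Hvt HtS]]] :=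
    implyP (forallP HS v) Hv.
  case: (eqVneq v c) => [Evc|Hvc].
  - subst v.
    have Htc : t != c by apply: contraTneq Hvt => ->; rewrite Hirr.
    have /andP [/existsP [s /andP [Hts HsS]] _] := implyP (forallP HS t) HtS.
    move: Hts; rewrite Hc (negbTE Htc) /= andbT => /eqP Esc.
    by move: HsS Hv; rewrite Esc => ->.
  - move: Hvt Hvu; rewrite !Hc (negbTE Hvc) /= !andbT => /eqP Etc /eqP Euc.
    by move: HuS HtS; rewrite Euc Etc => ->.
pose g : {ffun T -> 'I_4} := [ffun v => if v == c then inord 2 else inord 1].
have Hgv : forall v, (g v : nat) = if v == c then 2 else 1.
  by move=> v; rewrite ffunE; case: (v == c); rewrite inordK.
have Hgr : is_RDRD e g.
  apply/forallP => v; rewrite !Hgv; case: (eqVneq v c) => [//|Hvc] /=.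
  by rewrite andbT; apply/existsP; exists c; rewrite Hgv eqxx Hc eqxx Hvc /= ?andbF ?orbT.
have := rdrd_le Hgr.
have -> : weight g = #|T| + 1.
  rewrite /weight (eq_bigr (fun v => 1 + (v == c))); last first.
    by move=> v _; rewrite Hgv; case: (v == c).
  rewrite big_split /= sum1_card (bigD1 c) //= eqxx big1 //.
  by move=> i /negbTE ->.
rewrite Ef in Hr Hg *; lia.
Qed.

Unset Implicit Arguments.

Theorem proposition2p10 (T : finType) (e : rel T) :
  is_tree e ->
  (rdrd_number e = domination_number e + restrained_domination_number e
   <-> is_star e).
Proof.
move=> Ht; split => [Heq|Hs].
- apply: NNPP => Hns.
  have [f Hf Ef] := rdrd_ex e.
  have := strictB Ht Hns Hf; lia.
- have [Hsg [Hn _]] := Ht; exact: star_eq Hsg Hn Hs.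
Qed.
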